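(* Fix $1\le i\le h$ and let $\hat F_i\subseteq B_i$ be such that $\hat G_i=(V(T_i),\hat F_i)$ is a forest of stars. Let $L_i$ be the set of vertices of $T_i$ that are leaves of some star of $\hat G_i$, where for a star with a single edge one of its two endpoints (arbitrarily chosen) is regarded as its leaf. Then $r(\hat F_i)\ge\sum_{v\in L_i}c_i(v_0,v)$.
   Context: $\mathsf{StackMST}(\gamma,\Delta)$: given a tree $T=(V,E(T))$ with red edge costs $c(e)\ge0$, activation costs $\gamma(e)\ge0$ for every pair $e\notin E(T)$, and a budget $\Delta$; the leader activates and prices new edges, the follower takes a minimum spanning tree breaking ties in favor of the leader, whose revenue is the total price of selected new edges. For a red (multi)graph tree with costs $c'$ and a set $F$ of added edges, define for $e\in F$: $p_F(e)=\min_H\max_{e'\in E(H)\text{ red}}c'(e')$ over all simple cycles $H$ containing $e$ in the multigraph of red edges plus $F$; $r(F)$ is the leader's revenue when activating $F$ priced by $p_F$. Root $T$ at its center $v_0$; $h$ is its height. For $1\le i\le h$, $V_i=\{v_1,\dots,v_{\ell_i}\}$ are the vertices at depth $i$, $E_i$ the edges joining them to their parents; $T_i$ is the red star centered at $v_0$ with leaves $v_1,\dots,v_{\ell_i}$ and costs $c_i(v_0,v)=c(u,v)$, $u$ the parent of $v$ in $T$; by convention $c_i(v_0,v_0)=0$. Let $\hat T_0,\dots,\hat T_{\ell_i}$ be the components of $T-E_i$, $v_0\in\hat T_0$, $v_j\in\hat T_j$; for $j\ne q$, $B_i$ contains the edge $(v_j,v_q)$ whenever some pair not in $E(T)$ joins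 $\hat T_j$ and $\hat T_q$ (edges $(v_0,v_q)$ are parallel to red edges). $r(\hat F_i)$ is computed in the auxiliary instance with red star $T_i$ and costs $c_i$. *)

(* Defs.v *)
From Stdlib Require Import ClassicalEpsilon.
From HB Require Import structures.
From mathcomp Require Import all_boot all_order all_algebra.
Set Implicit Arguments. Unset Strict Implicit. Unset Printing Implicit Defensive.
Import Order.TTheory GRing.Theory Num.Theory.
Local Open Scope ring_scope.

Definition mg_adj (V E : finType) (ends : E -> {set V}) (S : {set E}) : rel V :=
  fun a b => [exists e in S, (a != b) && (ends e == [set a; b])].

(* (es, xs) is a simple cycle using edges of A: distinct edges e_1..e_k,
   distinct vertices x_0..x_{k-1}, k >= 2, and e_j joins x_{j-1}, x_j
   (indices mod k).  k = 2 corresponds to two parallel edges. *)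
Definition simple_cycle (V E : finType) (ends : E -> {set V}) (A : {set E})
    (es : seq E) (xs : seq V) : Prop :=
  [/\ (2 <= size es)%N, size xs = size es, uniq es & uniq xs] /\
  [/\ all (fun e => e \in A) es &
      all2 (fun e p => ends e == [set p.1; p.2]) es (zip xs (rot 1 xs))].

Definition is_spanning_tree (V E : finType) (ends : E -> {set V})
    (W : {set V}) (A S : {set E}) : Prop :=
  [/\ S \subset A,
      {in W &, forall x y, connect (mg_adj ends S) x y} &
      forall es xs, ~ simple_cycle ends S es xs].

Definition mg_weight (R : realFieldType) (E : finType) (w : E -> R)
    (S : {set E}) : R := \sum_(e in S) w e.

Definition is_mst (R : realFieldType) (V E : finType) (ends : E -> {set V})
    (W : {set V}) (A : {set E}) (w : E -> R) (S : {set E}) : Prop :=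
  is_spanning_tree ends W A S /\
  forall S', is_spanning_tree ends W A S' -> mg_weight w S <= mg_weight w S'.

Definition bottleneck (R : realFieldType) (E : finType) (red : {set E})
    (cost : E -> R) (es : seq E) : R :=
  \big[Num.max/0]_(e <- es | e \in red) cost e.

Definition is_pF (R : realFieldType) (V E : finType) (ends : E -> {set V})
    (A red : {set E}) (cost : E -> R) (e : E) (p : R) : Prop :=
  (exists es xs, [/\ simple_cycle ends A es xs, e \in es &
                     bottleneck red cost es = p]) /\
  (forall es xs, simple_cycle ends A es xs -> e \in es ->
                 p <= bottleneck red cost es).

Definition pF (R : realFieldType) (V E : finType) (ends : E -> {set V})
    (A red : {set E}) (cost : E -> R) (e : E) : R :=
  epsilon (inhabits 0) (is_pF ends A red cost e).

Definition follower_w (R : realFieldType) (V E : finType) (ends : E -> {set V})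
    (A red : {set E}) (cost : E -> R) (e : E) : R :=
  if e \in red then cost e else pF ends A red cost e.

Definition leader_rev (R : realFieldType) (V E : finType) (ends : E -> {set V})
    (A red : {set E}) (cost : E -> R) (S : {set E}) : R :=
  \sum_(e in S | e \in A :\: red) pF ends A red cost e.

(* the follower takes a minimum spanning tree, ties broken in favour of
   the leader: r is the largest leader revenue over all MSTs *)
Definition is_r (R : realFieldType) (V E : finType) (ends : E -> {set V})
    (W : {set V}) (A red : {set E}) (cost : E -> R) (r : R) : Prop :=
  (exists S, is_mst ends W A (follower_w ends A red cost) S /\
             leader_rev ends A red cost S = r) /\
  (forall S, is_mst ends W A (follower_w ends A red cost) S ->
             leader_rev ends A red cost S <= r).

Definition revenue (R : realFieldType) (V E : finType) (ends : E -> {set V})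
    (W : {set V}) (A red : {set E}) (cost : E -> R) : R :=
  epsilon (inhabits 0) (is_r ends W A red cost).

Definition is_tree (V : finType) (ET : {set {set V}}) : Prop :=
  (forall e, e \in ET -> #|e| = 2%N) /\
  is_spanning_tree (fun e : {set V} => e) [set: V] ET ET.

Definition ball (V : finType) (ET : {set {set V}}) (n : nat) (u : V) : {set V} :=
  iter n (fun S => S :|: [set y | [exists x in S, [set x; y] \in ET]]) [set u].

Definition dist (V : finType) (ET : {set {set V}}) (u v : V) : nat :=
  find (fun n => v \in ball ET n u) (iota 0 #|V|).

Definition ecc (V : finType) (ET : {set {set V}}) (u : V) : nat :=
  \max_(v : V) dist ET u v.

Definition is_center (V : finType) (ET : {set {set V}}) (v0 : V) : Prop :=
  forall u, (ecc ET v0 <= ecc ET u)%N.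

Definition height (V : finType) (ET : {set {set V}}) (v0 : V) : nat := ecc ET v0.

Definition depth (V : finType) (ET : {set {set V}}) (v0 v : V) : nat :=
  dist ET v0 v.

Definition Vlev (V : finType) (ET : {set {set V}}) (v0 : V) (i : nat) : {set V} :=
  [set v | depth ET v0 v == i].

Definition parent (V : finType) (ET : {set {set V}}) (v0 v : V) : V :=
  odflt v [pick u | ([set u; v] \in ET) && ((depth ET v0 u).+1 == depth ET v0 v)].

Definition ci (R : realFieldType) (V : finType) (ET : {set {set V}})
    (c : {set V} -> R) (v0 v : V) : R :=
  if v == v0 then 0 else c [set parent ET v0 v; v].

Definition Elev (V : finType) (ET : {set {set V}}) (v0 : V) (i : nat)
  : {set {set V}} := [set [set parent ET v0 v; v] | v in Vlev ET v0 i].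

Definition compi (V : finType) (ET : {set {set V}}) (v0 : V) (i : nat) (x a : V)
  : bool :=
  connect (fun p q => ([set p; q] \in ET) && ([set p; q] \notin Elev ET v0 i)) x a.

Definition Wlev (V : finType) (ET : {set {set V}}) (v0 : V) (i : nat) : {set V} :=
  v0 |: Vlev ET v0 i.

Definition Blev (V : finType) (ET : {set {set V}}) (v0 : V) (i : nat)
  : {set {set V}} :=
  [set p | [exists x in Wlev ET v0 i, exists y in Wlev ET v0 i,
     [&& x != y, p == [set x; y] &
         [exists a, exists b,
            [&& compi ET v0 i x a, compi ET v0 i y b, a != b &
                [set a; b] \notin ET]]]]].

(* Edges: inl v = red edge (v0, v), v in V_i; inr p = added edge p.   *)

Definition aux_ends (V : finType) (v0 : V) (e : (V + {set V})%type) : {set V} :=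
  match e with inl v => [set v0; v] | inr p => p end.

Definition aux_cost (R : realFieldType) (V : finType) (ET : {set {set V}})
    (c : {set V} -> R) (v0 : V) (e : (V + {set V})%type) : R :=
  match e with inl v => ci ET c v0 v | inr _ => 0 end.

Definition aux_red (V : finType) (ET : {set {set V}}) (v0 : V) (i : nat)
  : {set (V + {set V})%type} := [set inl v | v in Vlev ET v0 i].

Definition aux_edges (V : finType) (ET : {set {set V}}) (v0 : V) (i : nat)
    (F : {set {set V}}) : {set (V + {set V})%type} :=
  aux_red ET v0 i :|: [set inr p | p in F].

Definition r_aux (R : realFieldType) (V : finType) (ET : {set {set V}})
    (c : {set V} -> R) (v0 : V) (i : nat) (F : {set {set V}}) : R :=
  revenue (aux_ends v0) (Wlev ET v0 i) (aux_edges ET v0 i F) (aux_red ET v0 i)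
          (aux_cost ET c v0).

Definition fadj (V : finType) (F : {set {set V}}) : rel V :=
  fun x y => [set x; y] \in F.

Definition forest_of_stars (V : finType) (W : {set V}) (F : {set {set V}}) : Prop :=
  (forall p, p \in F -> p \subset W /\ #|p| = 2%N) /\
  forall x, x \in W -> exists2 z, connect (fadj F) x z &
    (forall y, connect (fadj F) x y -> y != z -> fadj F z y) /\
    (forall a b, fadj F a b -> connect (fadj F) x a -> (a == z) || (b == z)).

Definition fdeg (V : finType) (F : {set {set V}}) (v : V) : nat :=
  #|[set u | fadj F v u]|.

(* L is the set of leaves of the stars of (W, F): leaves have degree 1;
   the non-center endpoints of stars with >= 2 edges are leaves; for a
   star with a single edge exactly one (arbitrary) endpoint is a leaf *)
Definition star_leaves (V : finType) (F : {set {set V}}) (L : {set V}) : Prop :=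
  [/\ forall v, v \in L -> fdeg F v = 1%N,
      forall u v, fadj F u v -> (2 <= fdeg F u)%N -> v \in L &
      forall u v, fadj F u v -> fdeg F u = 1%N -> fdeg F v = 1%N ->
                  (u \in L) != (v \in L)].

(* Main.v *)
Require Import Defs.
From Stdlib Require Import Classical ClassicalEpsilon.
From HB Require Import structures.
From mathcomp Require Import all_boot all_order all_algebra.
Set Implicit Arguments. Unset Strict Implicit. Unset Printing Implicit Defensive.
Import Order.TTheory GRing.Theory Num.Theory.
Local Open Scope ring_scope.

Lemma fin_min_nat (O : Type) (P : O -> Prop) (f : O -> nat) :
  (exists o, P o) -> exists o, P o /\ forall o', P o' -> (f o <= f o')%N.
Proof.
move=> [o Po].
suff H : forall n o, (f o <= n)%N -> P o -> exists o, P o /\ forall o', P o' -> (f o <= f o')%N.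
  exact: (H (f o) o).
elim=> [|n IH] {Po}o ho Po'.
  by exists o; split => // o' _; move: ho; rewrite leqn0 => /eqP ->.
have [H|H] := classic (exists o', P o' /\ (f o' < f o)%N).
  by case: H => o' [Po'' lt]; apply: (IH o') => //; move: lt ho; apply: leq_trans.
exists o; split => // o' Po''; rewrite leqNgt; apply/negP => lt; apply: H; by exists o'.
Qed.

Lemma fin_min_R (R : realDomainType) (O : finType) (P : O -> Prop) (f : O -> R) :
  (exists o, P o) -> exists o, P o /\ forall o', P o' -> f o <= f o'.
Proof.
move=> ex; have [o [Po H]] := fin_min_nat (fun o => #|[set x | f x < f o]|) ex.
exists o; split => // o' Po'; rewrite leNgt; apply/negP => lt.
have := H o' Po'; rewrite leqNgt => /negP; apply; apply: proper_card.
apply/properP; split.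
  by apply/subsetP => x; rewrite !inE => /lt_trans; apply.
by exists o'; rewrite !inE ?lt // ltxx.
Qed.

Section Graph.
Variables (V E : finType) (ends : E -> {set V}).

Lemma mg_adj_sym (S : {set E}) : symmetric (mg_adj ends S).
Proof.
move=> a b; rewrite /mg_adj; apply/existsP/existsP => -[e /andP[eS /andP[ab /eqP he]]];
  exists e; rewrite eS eq_sym ab he /= setUC //.
Qed.

Lemma mg_adj_sub (S S' : {set E}) : S \subset S' -> subrel (mg_adj ends S) (mg_adj ends S').
Proof.
move=> sub a b /existsP[e /andP[eS H]]; apply/existsP; exists e.
by rewrite (subsetP sub _ eS).
Qed.

Lemma connect_mg_sub (S S' : {set E}) : S \subset S' ->
  subrel (connect (mg_adj ends S)) (connect (mg_adj ends S')).
Proof.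
move=> sub; apply: connect_sub => a b H; apply: connect1; exact: mg_adj_sub H.
Qed.

Lemma connect_pair (r : rel V) a b x y : symmetric r -> connect r x y ->
  [set a; b] = [set x; y] -> connect r a b.
Proof.
move=> sr cxy eq.
have ha : a \in [set x; y] by rewrite -eq !inE eqxx.
have hb : b \in [set x; y] by rewrite -eq !inE eqxx orbT.
have csym := sym_connect_sym sr.
move: ha hb; rewrite !inE => /orP[]/eqP-> /orP[]/eqP->; rewrite ?connect0 //.
by rewrite csym.
Qed.

Fixpoint cpairs (x : V) (s : seq V) : seq (V * V) :=
  if s is y :: s' then (x, y) :: cpairs y s' else [::].

Lemma cpairs_zip x s : cpairs x s = zip (belast x s) s.
Proof. by elim: s x => //= y s IH x; rewrite IH. Qed.

Lemma cpairs_rcons x s z : cpairs x (rcons s z) = rcons (cpairs x s) (last x s, z).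
Proof. by elim: s x => //= y s IH x; rewrite IH. Qed.

Lemma walk_connect (Y : {set E}) es x s :
  all2 (fun e p => ends e == [set p.1; p.2]) es (cpairs x s) ->
  all (fun e => e \in Y) es -> uniq (x :: s) ->
  connect (mg_adj ends Y) x (last x s).
Proof.
elim: s x es => [|y s IH] x es /=; first by rewrite connect0.
case: es => //= e es /andP[/eqP he H2] /andP[eY HY] /andP[xn us].
apply: connect_trans (IH _ _ H2 HY us).
apply: connect1; apply/existsP; exists e; rewrite eY he eqxx andbT.
by apply: contraNneq xn => ->; rewrite inE eqxx.
Qed.


Lemma zip_drop (A B : Type) n (s : seq A) (t : seq B) :
  zip (drop n s) (drop n t) = drop n (zip s t).
Proof.
elim: n s t => [|n IH] [|a s] [|b t] //=.
all: try by case: (drop _ _).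
Qed.

Lemma zip_take (A B : Type) n (s : seq A) (t : seq B) :
  zip (take n s) (take n t) = take n (zip s t).
Proof. by elim: n s t => [|n IH] [|a s] [|b t] //=; rewrite IH. Qed.

Lemma zip_rot (A B : Type) n (s : seq A) (t : seq B) : size s = size t ->
  zip (rot n s) (rot n t) = rot n (zip s t).
Proof.
move=> st; rewrite /rot zip_cat ?size_drop ?st // zip_drop zip_take //.
Qed.

Lemma all_rot' (T : Type) (p : pred T) n s : all p (rot n s) = all p s.
Proof. by rewrite /rot all_cat andbC -all_cat cat_take_drop. Qed.

Lemma simple_cycle_rot (A : {set E}) es xs n :
  simple_cycle ends A es xs -> simple_cycle ends A (rot n es) (rot n xs).
Proof.
case=> -[h2 hs hu hux] [ha h2'].
split; first by split; rewrite ?size_rot ?rot_uniq.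
split; first by rewrite all_rot'.
move: h2'; rewrite !all2E !size_zip !size_rot => /andP[-> hall] /=.
rewrite rot_rot zip_rot ?size_rot // zip_rot; last by rewrite size_zip size_rot hs minnn.
by rewrite all_rot'.
Qed.

Lemma cpairs_rcons' x s z : cpairs x (rcons s z) = zip (x :: s) (rcons s z).
Proof. by rewrite cpairs_zip belast_rcons. Qed.

Lemma cycle_nf (A : {set E}) es xs e :
  simple_cycle ends A es xs -> e \in es ->
  exists es' x0 x1 s', [/\ ends e = [set x0; x1],
     all2 (fun e p => ends e == [set p.1; p.2]) es' (cpairs x1 (rcons s' x0)),
     uniq (x0 :: x1 :: s'), e \notin es' &
     [/\ {subset es' <= es}, size es' = (size s').+1 & all (fun e => e \in A) es']].
Proof.
move=> hc he.
have := simple_cycle_rot (index e es) hc.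
have hi : (index e es < size es)%N by rewrite index_mem.
set es' := drop (index e es).+1 es ++ take (index e es) es.
have hr : rot (index e es) es = e :: es'.
  by rewrite /rot (drop_nth e hi) nth_index.
rewrite hr.
case=> -[h2 hs hu hux] [ha h2'].
move: hs hux h2'.
case: (rot _ xs) => [|x0 [|x1 s']] hs.
- by rewrite -hs in h2.
- by rewrite -hs in h2.
move=> hux; rewrite rot1_cons rcons_cons -cpairs_rcons' /= => /andP[/eqP he' h2'].
move: ha hu => /= /andP[_ ha] /andP[hne hu].
exists es', x0, x1, s'; split => //.
split => //.
- move=> y hy; rewrite -(mem_rot (index e es)) hr.
  by rewrite inE hy orbT.
- by case: hs.
Qed.

Lemma all2_last (A B : Type) (f : A -> B -> bool) s t x y :
  all2 f (rcons s x) (rcons t y) -> f x y.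
Proof.
elim: s t => [|a s IH] t; case: t => [|b t] /=.
- by rewrite andbT.
- by case: t; rewrite /= ?andbF.
- by case: s {IH} => [|? ?]; rewrite /= andbF.
- by move=> /andP[_]; apply: IH.
Qed.

Lemma cycle_conn (X : {set E}) es xs g :
  simple_cycle ends X es xs -> g \in es ->
  exists a b, [/\ ends g = [set a; b], a != b & connect (mg_adj ends (X :\ g)) a b].
Proof.
move=> hc hg; have [es' [x0 [x1 [s' [he h2 hu hn [hsub _ ha]]]]]] := cycle_nf hc hg.
exists x1, x0; split.
- by rewrite he setUC.
- by move: hu => /= /andP[]; rewrite inE negb_or eq_sym => /andP[].
have hu' : uniq (x1 :: rcons s' x0).
  by rewrite -rcons_cons -rot1_cons rot_uniq.
have := walk_connect (Y := X :\ g) h2 _ hu'; rewrite last_rcons; apply.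
apply/allP => y hy; rewrite !inE (allP ha _ hy) andbT.
by apply: contraNneq hn => <-.
Qed.

Lemma other_edge (X : {set E}) es xs e l :
  simple_cycle ends X es xs -> e \in es -> l \in ends e ->
  exists2 g, g \in es & (g != e) && (l \in ends g).
Proof.
move=> hc he; have [es' [x0 [x1 [s' [hee h2 hu hn [hsub hsz ha]]]]]] := cycle_nf hc he.
rewrite hee !inE => /orP[]/eqP->.
- case/lastP: es' h2 hn hsub hsz {ha} => [|es'' g] //.
  rewrite cpairs_rcons => h2 hn hsub _; exists g; first by apply: hsub; rewrite mem_rcons inE eqxx.
  rewrite (eqP (all2_last h2)) !inE eqxx orbT andbT.
  by apply: contraNneq hn => <-; rewrite mem_rcons inE eqxx.
- case: es' h2 hn hsub hsz {ha} => [|g es''] //.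
  case: s' hu => [|y s'] /= hu /andP[/eqP hg _] hn hsub _;
    (exists g; first by apply: hsub; rewrite inE eqxx);
    rewrite hg !inE eqxx /= ?orbT andbT;
    by apply: contraNneq hn => ->; rewrite inE eqxx.
Qed.


Lemma path_cpairs (r : rel V) x s : path r x s -> all (fun pr => r pr.1 pr.2) (cpairs x s).
Proof. by elim: s x => //= y s IH x /andP[-> /IH]. Qed.

Lemma mem_cpairs x s pr : pr \in cpairs x s -> (pr.1 \in x :: s) && (pr.2 \in x :: s).
Proof.
elim: s x => //= y s IH x; rewrite inE => /orP[/eqP -> | /IH]; first by rewrite /= !inE !eqxx orbT.
by rewrite !inE => /andP[-> ->]; rewrite !orbT.
Qed.

Lemma uniq_cpairs x s : uniq (x :: s) ->
  uniq [seq [set pr.1; pr.2] | pr <- cpairs x s].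
Proof.
elim: s x => //= y s IH x /andP[hx hu]; rewrite IH // andbT.
apply/mapP => -[pr /mem_cpairs /andP[h1 h2] heq].
have : x \in [set pr.1; pr.2] by rewrite -heq !inE eqxx.
by rewrite !inE => /orP[]/eqP hh; move: hx; rewrite hh ?h1 ?h2.
Qed.

Lemma all2_map_l (A B : Type) (f : A -> B -> bool) (h : B -> A) s :
  all2 f (map h s) s = all (fun b => f (h b) b) s.
Proof. by elim: s => //= b s ->. Qed.

Lemma conn_cycle (X : {set E}) g p q :
  g \in X -> ends g = [set p; q] -> p != q ->
  connect (mg_adj ends (X :\ g)) q p ->
  exists es xs, simple_cycle ends X es xs /\ g \in es.
Proof.
move=> gX hg pq /connectP[pth0 hp0 hl]; subst p.
case/shortenP: hp0 hg pq => pth hpth hu _ hg pq.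
set Y := X :\ g.
pose edgeof (pr : V * V) := odflt g [pick e in Y | ends e == [set pr.1; pr.2]].
have hadj := path_cpairs hpth.
have hedge pr : pr \in cpairs q pth -> (edgeof pr \in Y) && (ends (edgeof pr) == [set pr.1; pr.2]).
  move=> /(allP hadj) /existsP[e /andP[eY /andP[_ he]]].
  rewrite /edgeof; case: pickP => [e' /andP[-> ->] //|/(_ e)]; by rewrite eY he.
exists (g :: map edgeof (cpairs q pth)), (last q pth :: belast q pth); split; last by rewrite inE eqxx.
have hpne : pth != [::] by apply: contraNneq pq => ->.
split; split.
- by case: pth hpne {hpth hu hadj hedge hg pq}.
- by rewrite /= size_map size_belast cpairs_zip size_zip size_belast minnn.
- rewrite /= (map_uniq (f := ends)); first last.
    rewrite -map_comp.
    have -> : map (ends \o edgeof) (cpairs q pth) = map (fun pr => [set pr.1; pr.2]) (cpairs q pth).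
      by apply/eq_in_map => pr /hedge /andP[_ /eqP].
    exact: uniq_cpairs.
  rewrite andbT; apply/mapP => -[pr /hedge /andP[hY _] hge].
  by move: hY; rewrite -hge /Y !inE eqxx.
- by rewrite -(rot_uniq 1) rot1_cons -lastI.
- rewrite /= gX /=; apply/allP => e /mapP[pr /hedge /andP[hY _] ->].
  by move: hY; rewrite /Y !inE => /andP[].
- rewrite rot1_cons -lastI /= hg eqxx /= -cpairs_zip all2_map_l.
  by apply/allP => pr /hedge /andP[].
Qed.


Lemma cycle_sub (A B : {set E}) es xs :
  simple_cycle ends A es xs -> {subset es <= B} -> simple_cycle ends B es xs.
Proof.
case=> h1 [_ h2] hs; split => //; split => //; apply/allP => x hx; exact: hs.
Qed.

Lemma exchange (W : {set V}) (A S : {set E}) e f es xs :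
  is_spanning_tree ends W A S -> e \in A -> e \notin S ->
  simple_cycle ends (e |: S) es xs -> e \in es -> f \in es -> f != e ->
  is_spanning_tree ends W A (e |: (S :\ f)).
Proof.
move=> [hsub hconn hacyc] eA eS hC ee fe fne.
have fS : f \in S.
  case: hC => _ [/allP /(_ f fe)]; rewrite !inE (negPf fne) //.
have [a [b [hab anb cab]]] := cycle_conn hC fe.
have heq : (e |: S) :\ f = e |: (S :\ f).
  apply/setP => x; rewrite !inE; case: (x =P e) => [->|_] /=; [by rewrite eq_sym fne | by []].
rewrite heq in cab.
split.
- apply/subsetP => x; rewrite !inE => /orP[/eqP->|/andP[_ xS]] //; exact: (subsetP hsub x xS).
- move=> x y hx hy; move: (hconn x y hx hy); apply: connect_sub => u v /existsP[g /andP[gS /andP[uv /eqP hge]]].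
  case: (g =P f) => [gf|/eqP gf].
    apply: (connect_pair (@mg_adj_sym _) cab); by rewrite -hab -gf.
  apply: connect1; apply/existsP; exists g; by rewrite !inE gf gS uv hge eqxx orbT.
- move=> ds ys hD.
  have [eD|eD] := boolP (e \in ds).
    have [x [y [hxy xny cxy]]] := cycle_conn hD eD.
    have cxy' : connect (mg_adj ends (S :\ f)) x y.
      apply: (connect_mg_sub _ cxy); apply/subsetP => z; rewrite !inE.
      by case/andP => ze /orP[/eqP zee|//]; rewrite zee eqxx in ze.
    have cab' : connect (mg_adj ends (S :\ f)) b a.
      rewrite (sym_connect_sym (@mg_adj_sym _)).
      move: cab; apply: connect_sub => u v /existsP[g /andP[gS /andP[uv /eqP hge]]].
      case: (g =P e) => [ge|/eqP ge].
        apply: (connect_pair (@mg_adj_sym _) cxy'); by rewrite -hxy -ge.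
      apply: connect1; apply/existsP; exists g; move: gS; rewrite !inE (negPf ge) /= => gS.
      by rewrite gS uv hge eqxx.
    have [es2 [xs2 [hc2 _]]] := conn_cycle fS hab anb cab'.
    exact: hacyc hc2.
  have hD' := hD.
  apply: (hacyc ds ys); apply: cycle_sub hD _ => z zd.
  case: hD' => _ [/allP /(_ z zd)]; rewrite !inE => /orP[/eqP ze|/andP[]//].
  by rewrite -ze zd in eD.
Qed.

Lemma st_exists (W : {set V}) (A : {set E}) :
  {in W &, forall x y, connect (mg_adj ends A) x y} ->
  exists S, is_spanning_tree ends W A S.
Proof.
move=> hA.
have [X [[XA Xc] Xmin]] := fin_min_nat (fun X : {set E} => #|X|)
  (ex_intro (fun X : {set E} => X \subset A /\ {in W &, forall x y, connect (mg_adj ends X) x y}) A (conj (subxx A) hA)).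
exists X; split => // es xs hc.
have [g ges] : exists g, g \in es.
  case: hc => -[h2 _ _ _] _; case: es h2 => // g es _; exists g; exact: mem_head.
have gX : g \in X by case: hc => _ [/allP /(_ g ges)].
have [a [b [hab _ cab]]] := cycle_conn hc ges.
suff : (#|X| <= #|X :\ g|)%N by rewrite (cardsD1 g X) gX add1n ltnn.
apply: Xmin; split.
  by apply: subset_trans XA; apply: subsetDl.
move=> x y hx hy; move: (Xc x y hx hy); apply: connect_sub => u v /existsP[h /andP[hX /andP[uv /eqP hhe]]].
case: (h =P g) => [hg|/eqP hg].
  apply: (connect_pair (@mg_adj_sym _) cab); by rewrite -hab -hg.
apply: connect1; apply/existsP; exists h; by rewrite !inE hg hX uv hhe eqxx.
Qed.

End Graph.

Section Bott.
Variables (R : realFieldType) (E : finType) (red : {set E}) (cost : E -> R).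

Lemma bott_ge0 es : 0 <= bottleneck red cost es.
Proof.
rewrite /bottleneck; elim: es => [|g es IH]; rewrite ?big_nil ?big_cons //.
by case: ifP => // _; rewrite le_max IH orbT.
Qed.

Lemma bott_ge es g : g \in es -> g \in red -> cost g <= bottleneck red cost es.
Proof.
rewrite /bottleneck; elim: es => [|h es IH] //; rewrite inE big_cons => /orP[/eqP<- ->|/IH H /H].
  by rewrite le_max lexx.
by case: ifP => // _ H'; rewrite le_max H' orbT.
Qed.

Lemma bott_le es M : 0 <= M -> (forall g, g \in es -> g \in red -> cost g <= M) ->
  bottleneck red cost es <= M.
Proof.
rewrite /bottleneck; elim: es => [|h es IH] M0 H; rewrite ?big_nil ?big_cons //.
have IH' : \big[Num.max/0]_(j <- es | j \in red) cost j <= M.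
  by apply: IH => // g gs; apply: H; rewrite inE gs orbT.
case: ifP => // hr; rewrite ge_max IH' andbT; apply: H => //; exact: mem_head.
Qed.

Lemma bott_val es : exists o : option E,
  bottleneck red cost es = if o is Some g then cost g else 0.
Proof.
rewrite /bottleneck; elim: es => [|h es [o IH]]; first by exists None; rewrite big_nil.
rewrite big_cons; case: ifP => _; last by exists o.
rewrite IH /Num.max; case: ifP => _; [by exists o | by exists (Some h)].
Qed.

End Bott.

Section Aux.
Variables (R : realFieldType) (V : finType) (ET : {set {set V}})
  (c : {set V} -> R) (v0 : V) (i : nat) (F : {set {set V}}) (L : {set V}).
Hypotheses (hi : (1 <= i)%N) (hFS : forest_of_stars (Wlev ET v0 i) F)
  (hL : star_leaves F L).

Local Notation E' := (V + {set V})%type.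
Local Notation ends := (aux_ends v0).
Local Notation W := (Wlev ET v0 i).
Local Notation A := (aux_edges ET v0 i F).
Local Notation red := (aux_red ET v0 i).
Local Notation cost := (aux_cost ET c v0).

Lemma depth_v0 : depth ET v0 v0 = 0%N.
Proof.
rewrite /depth /dist; have : (0 < #|V|)%N by apply/card_gt0P; exists v0.
by case: #|V| => // n _ /=; rewrite /ball /= inE eqxx.
Qed.

Lemma v0_notin : v0 \notin Vlev ET v0 i.
Proof. by rewrite /Vlev inE depth_v0; case: i hi. Qed.


Lemma inW_Vlev w : w \in W -> w != v0 -> w \in Vlev ET v0 i.
Proof. by rewrite /Wlev in_setU1 => /orP[->|]. Qed.

Lemma conn_red w : w \in W -> connect (mg_adj ends red) w v0.
Proof.
rewrite /Wlev in_setU1 => /orP[/eqP->|wV]; first exact: connect0.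
have wv : w != v0 by apply: (contraTneq _ wV) => ->; exact: v0_notin.
apply: connect1; apply/existsP; exists (inl w); rewrite /aux_red imset_f //= wv /=.
by rewrite [[set w; v0]]setUC.
Qed.

Lemma red_A : red \subset A.
Proof. exact: subsetUl. Qed.

Lemma A_conn : {in W &, forall x y, connect (mg_adj ends A) x y}.
Proof.
move=> x y hx hy; apply: (connect_mg_sub red_A).
apply: connect_trans (conn_red hx) _.
by rewrite (sym_connect_sym (@mg_adj_sym _ _ _ _)) conn_red.
Qed.

Lemma F2 p : p \in F -> exists x y, [/\ x != y, p = [set x; y], x \in W & y \in W].
Proof.
move=> hp; have [sub c2] := hFS.1 p hp.
move/eqP: c2 => /cards2P [x [y [xy hxy]]]; exists x, y; split => //;
  apply: (subsetP sub); rewrite hxy !inE eqxx ?orbT //.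
Qed.

Lemma inr_A p : p \in F -> (inr p : E') \in A.
Proof. by move=> hp; rewrite /aux_edges inE imset_f ?orbT. Qed.

Lemma inr_notred p : (inr p : E') \notin red.
Proof. by apply/imsetP => -[v _]. Qed.

Lemma red_notF g : g \in red -> exists2 v, g = inl v & v \in Vlev ET v0 i.
Proof. by case/imsetP => v hv ->; exists v. Qed.

Lemma pF_spec p : p \in F ->
  is_pF ends A red cost (inr p) (pF ends A red cost (inr p)).
Proof.
move=> hp; apply: epsilon_spec.
have [x [y [xy hxy hx hy]]] := F2 hp.
have hc : exists es xs, simple_cycle ends A es xs /\ (inr p : E') \in es.
  apply: (conn_cycle (p := x) (q := y)) => //; first exact: inr_A.
  apply: (@connect_mg_sub _ _ _ red _).
    apply/subsetP => z zr; rewrite !inE zr /= andbT.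
    by case/red_notF: zr => v -> _.
  apply: connect_trans (conn_red hy) _.
  by rewrite (sym_connect_sym (@mg_adj_sym _ _ _ _)) conn_red.
pose val (o : option E') := if o is Some g then cost g else 0.
have hex : exists o, exists es xs, [/\ simple_cycle ends A es xs, (inr p : E') \in es &
                          bottleneck red cost es = val o].
  case: hc => es [xs [h1 h2]]; have [o ho] := bott_val red cost es.
  by exists o, es, xs.
have [o [[es [xs [hc1 he hb]]] omin]] := fin_min_R val hex.
exists (val o); split; first by exists es, xs.
move=> es' xs' hc' he'; have [o' ho'] := bott_val red cost es'.
rewrite ho'; apply: omin; by exists es', xs'.
Qed.

Lemma pF_ge0 p : p \in F -> 0 <= pF ends A red cost (inr p).
Proof.
move=> /pF_spec [[es [xs [_ _ <-]]] _]; exact: bott_ge0.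
Qed.


Definition nb (l : V) : V := odflt l [pick u | fadj F l u].
Definition el (l : V) : E' := inr [set l; nb l].

Lemma hL1 l : l \in L -> fdeg F l = 1%N.
Proof. by case: hL => h _ _; apply: h. Qed.

Lemma hL3 u v : fadj F u v -> fdeg F u = 1%N -> fdeg F v = 1%N -> (u \in L) != (v \in L).
Proof. by case: hL => _ _ h; apply: h. Qed.

Lemma nb_spec l : l \in L -> fadj F l (nb l) /\ forall u, fadj F l u -> u = nb l.
Proof.
move=> hl; have /eqP/cards1P [x hx] := hL1 hl.
have mem u : fadj F l u -> u = x.
  by move=> hu; apply/set1P; rewrite -hx inE.
have hxa : fadj F l x.
  have : x \in [set u | fadj F l u] by rewrite hx set11.
  by rewrite inE.
rewrite /nb; case: pickP => [u hu|/(_ x)]; last by rewrite hxa.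
by rewrite (mem u hu); split => // v /mem.
Qed.

Lemma el_F l : l \in L -> [set l; nb l] \in F.
Proof. by move=> /nb_spec []. Qed.

Lemma leaf_W l : l \in L -> l \in W /\ nb l \in W.
Proof.
move=> hl; have [sub _] := hFS.1 _ (el_F hl).
by split; apply: (subsetP sub); rewrite !inE eqxx ?orbT.
Qed.

Lemma nb_neq l : l \in L -> l != nb l.
Proof.
move=> hl; have [_ c2] := hFS.1 _ (el_F hl).
apply/negP => /eqP h; move: c2; rewrite -h setUid cards1.
by [].
Qed.

Lemma el_A l : l \in L -> el l \in A.
Proof. by move=> /el_F /inr_A. Qed.

Lemma el_inj : {in L &, injective el}.
Proof.
move=> l l' hl hl' [heq].
case: (l =P l') => // /eqP ll'.
have h1 : l = nb l'.
  have : l \in [set l'; nb l'] by rewrite -heq !inE eqxx.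
  by rewrite !inE (negPf ll') => /eqP.
have h2 : l' = nb l.
  have : l' \in [set l; nb l] by rewrite heq !inE eqxx.
  by rewrite !inE eq_sym (negPf ll') => /eqP.
have ha : fadj F l l' by rewrite h2; case: (nb_spec hl).
have := hL3 ha (hL1 hl) (hL1 hl'); by rewrite hl hl'.
Qed.

Lemma keyK l es xs : l \in L -> l != v0 -> simple_cycle ends A es xs ->
  el l \in es -> (inl l : E') \in es.
Proof.
move=> hl lv hc he.
have lel : l \in ends (el l) by rewrite /= !inE eqxx.
have [g ges /andP[gne lg]] := other_edge hc he lel.
have gA : g \in A by case: hc => _ [/allP /(_ g ges)].
move: gA; rewrite /aux_edges inE => /orP[/red_notF [v gv _]|/imsetP[p pF gp]].
  move: lg; rewrite gv /= !inE (negPf lv) /= => /eqP lv'.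
  by rewrite lv' -gv.
exfalso; move: gne lg; rewrite gp /el /= => gne lp.
have [x [y [xy hxy _ _]]] := F2 pF.
have [hadj huniq] := nb_spec hl.
move: lp; rewrite hxy !inE => /orP[]/eqP lxy.
  have : y = nb l by apply: huniq; rewrite /fadj lxy -hxy.
  by move=> hy; move: gne; rewrite hxy -hy lxy eqxx.
have : x = nb l by apply: huniq; rewrite /fadj lxy setUC -hxy.
by move=> hx; move: gne; rewrite hxy -hx lxy [[set y; x]]setUC eqxx.
Qed.

Lemma pF_el l : l \in L -> l != v0 -> ci ET c v0 l <= pF ends A red cost (el l).
Proof.
move=> hl lv; have [[es [xs [hc he <-]]] _] := pF_spec (el_F hl).
have := keyK hl lv hc he => hin.
by have := bott_ge cost hin (imset_f _ (inW_Vlev (leaf_W hl).1 lv)).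
Qed.


Local Notation w := (follower_w ends A red cost).
Local Notation pFe := (pF ends A red cost).

Definition Dset := [set l in L | 0 < ci ET c v0 l].
Definition Qset := el @: Dset.

Lemma D_v0 l : l \in Dset -> l != v0 /\ l \in L.
Proof.
rewrite inE => /andP[hl hc]; split => //; apply: contraTneq hc => ->.
by rewrite /ci eqxx ltxx.
Qed.

Lemma Qnotred z : z \in Qset -> z \notin red.
Proof. by case/imsetP => l _ ->; exact: inr_notred. Qed.

Lemma Q_A z : z \in Qset -> z \in A.
Proof. by case/imsetP => l /D_v0 [_ hl] ->; exact: el_A. Qed.

Lemma main_ineq : \sum_(v in L) ci ET c v0 v <= r_aux ET c v0 i F.
Proof.
have [S0 hS0] := st_exists A_conn.
have [S1 [hS1 minS1]] := fin_min_R (P := fun S => is_spanning_tree ends W A S)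
  (mg_weight w) (ex_intro _ S0 hS0).
have hmst : exists S, is_mst ends W A w S by exists S1; split.
have [S [[hSst hSmin] Smin]] := fin_min_nat (P := is_mst ends W A w)
  (fun S => #|Qset :\: S|) hmst.
have QS : Qset \subset S.
  apply/subsetP => e eQ; apply/negPn/negP => eS.
  have eQ' := eQ.
  case/imsetP: eQ' eS => l hlD -> eS.
  have [lv hl] := D_v0 hlD.
  have [lW nW] := leaf_W hl.
  case: (hSst) => hsub hconn hacyc.
  have [es [xs [hC heC]]] : exists es xs, simple_cycle ends (el l |: S) es xs /\ el l \in es.
    apply: (conn_cycle (p := l) (q := nb l)) => //; first exact: setU11.
      exact: nb_neq.
    apply: (connect_mg_sub _ (hconn _ _ nW lW)).
    apply/subsetP => z zS; rewrite !inE zS orbT andbT.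
    by apply: contraNneq eS => <-.
  have hCall : forall z, z \in es -> z \in el l |: S.
    by move=> z hz; case: hC => _ [/allP /(_ z hz)].
  have hCA : simple_cycle ends A es xs.
    apply: (cycle_sub hC) => z /hCall; rewrite in_setU1 => /orP[/eqP->|zS].
      exact: el_A hl.
    exact: (subsetP hsub).
  have hin := keyK hl lv hCA heC.
  have hlred : (inl l : E') \in red by apply: imset_f; exact: inW_Vlev.
  have [f [[fes fred] fmax]] := fin_min_R (P := fun g => g \in es /\ g \in red)
    (fun g => - cost g) (ex_intro _ (inl l) (conj hin hlred)).
  have fmax' : forall g, g \in es -> g \in red -> cost g <= cost f.
    by move=> g h1 h2; rewrite -lerN2; apply: fmax.
  have cl : ci ET c v0 l <= cost f := fmax' _ hin hlred.
  have cpos : 0 < cost f.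
    by apply: lt_le_trans cl; move: hlD; rewrite inE => /andP[].
  have hb : bottleneck red cost es <= cost f := bott_le (ltW cpos) fmax'.
  have hpf : pFe (el l) <= cost f.
    apply: le_trans hb; exact: (pF_spec (el_F hl)).2 es xs hCA heC.
  have fne : f != el l.
    by apply: contraTneq fred => ->; exact: inr_notred.
  have hS' := exchange hSst (el_A hl) eS hC heC fes fne.
  have fS : f \in S.
    by move: (hCall f fes); rewrite !inE (negPf fne).
  have hw : mg_weight w (el l |: (S :\ f)) <= mg_weight w S.
    rewrite /mg_weight (big_setD1 f fS) /= big_setU1 /=; last first.
      by rewrite !inE negb_and eS orbT.
    rewrite lerD2r /follower_w (negPf (inr_notred _)) fred.
    exact: hpf.
  have hmst' : is_mst ends W A w (el l |: (S :\ f)).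
    split => // S'' h''; exact: le_trans hw (hSmin S'' h'').
  have := Smin _ hmst'; apply/negP; rewrite -ltnNge; apply: proper_card.
  apply/properP; split.
    apply/subsetP => z; rewrite !inE => /andP[zS' zQ]; rewrite zQ andbT.
    have zf : z != f by apply: contraNneq (Qnotred zQ) => ->.
    by move: zS'; rewrite negb_or zf /= => /andP[_].
  exists (el l); first by rewrite in_setD eS /Qset imset_f.
  by rewrite in_setD setU11.
have hrex : exists r, is_r ends W A red cost r.
  have [Sm [hSm Smax]] := fin_min_R (P := is_mst ends W A w)
    (fun S => - leader_rev ends A red cost S) (ex_intro _ S (conj hSst hSmin)).
  exists (leader_rev ends A red cost Sm); split; first by exists Sm.
  by move=> S'' h; rewrite -lerN2; apply: Smax.
have Hr : leader_rev ends A red cost S <= r_aux ET c v0 i F.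
  exact: (epsilon_spec _ _ hrex).2 S (conj hSst hSmin).
apply: le_trans Hr.
have h1 : \sum_(v in L | ~~ (0 < ci ET c v0 v)) ci ET c v0 v <= 0.
  by apply: sumr_le0 => v /andP[_]; rewrite -leNgt.
have h2 : \sum_(v in L | 0 < ci ET c v0 v) ci ET c v0 v = \sum_(v in Dset) ci ET c v0 v.
  by apply: eq_bigl => v; rewrite inE.
have h3 : \sum_(v in Dset) ci ET c v0 v <= \sum_(v in Dset) pFe (el v).
  by apply: ler_sum => v /D_v0 [lv hl]; exact: pF_el hl lv.
have h4 : \sum_(v in Dset) pFe (el v) = \sum_(e in Qset) pFe e.
  rewrite /Qset big_imset //.
  by move=> x y /D_v0[_ hx] /D_v0[_ hy]; exact: el_inj.
have h5 : \sum_(e in Qset) pFe e <= leader_rev ends A red cost S.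
  rewrite /leader_rev [X in _ <= X](bigID (fun e => e \in Qset)) /=.
  rewrite -[X in X <= _]addr0; apply: lerD.
    rewrite le_eqVlt; apply/orP; left; apply/eqP/eq_bigl => e; case eQ: (e \in Qset); rewrite ?andbF ?andbT //.
    by rewrite (subsetP QS _ eQ) in_setD (Qnotred eQ) (Q_A eQ).
  apply: sumr_ge0 => e /andP[/andP[_ he] _].
  move: he; rewrite in_setD => /andP[enr]; rewrite /aux_edges inE (negPf enr) /=.
  by case/imsetP => p hp ->; exact: pF_ge0.
rewrite (bigID (fun v => 0 < ci ET c v0 v)) /= h2.
apply: le_trans (lerD h3 h1) _; rewrite addr0 h4; exact: h5.
Qed.

End Aux.

Unset Implicit Arguments.

Theorem lemma8 (R : realFieldType) (V : finType) (ET : {set {set V}})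
    (c : {set V} -> R) (v0 : V) (i : nat) (F : {set {set V}}) (L : {set V}) :
  is_tree ET ->
  (forall e, e \in ET -> 0 <= c e) ->
  is_center ET v0 ->
  (1 <= i <= height ET v0)%N ->
  F \subset Blev ET v0 i ->
  forest_of_stars (Wlev ET v0 i) F ->
  star_leaves F L ->
  \sum_(v in L) ci ET c v0 v <= r_aux ET c v0 i F.
Proof.
move=> _ _ _ /andP[hi _] _ hFS hL.
exact: (main_ineq c hi hFS hL).
Qed.
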